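(* Let $I$ be a finite index set and let $\mathcal{F}:=\bigcup_{i\in I}\{p_i,p_i'\}$ be a family of vectors in $\mathbb{R}^d$ such that: (i) there is a nonzero vector $c$ with $(p_i+p_i')/2=c$ for all $i\in I$; (ii) $\langle p_i,p_i'\rangle=0$ for all $i\in I$; (iii) there is a subset $J\subseteq I$ of odd cardinality with $\sum_{j\in J}p_j=|J|\,c$; (iv) all pairwise inner products of vectors in $\mathcal{F}$ are nonnegative. Then the Gram matrix $\mathrm{Gram}(\mathcal{F})$ is doubly nonnegative but not completely positive.
   Context: $\mathrm{Gram}(\mathcal{F})$ is the matrix indexed by the members of the family $\mathcal{F}$ (with the $2|I|$ vectors $p_i,p_i'$, $i\in I$, as indices) whose entries are the pairwise inner products. A real symmetric matrix is doubly nonnegative if it is positive semidefinite and entrywise nonnegative. An $N\times N$ matrix $X$ is completely positive if there exist $k\ge1$ and entrywise nonnegative vectors $a_1,\dots,a_N\in\mathbb{R}^k_+$ with $X_{ij}=\langle a_i,a_j\rangle$ for all $i,j$. *)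

(* Defs.v *)
From HB Require Import structures.
From mathcomp Require Import all_boot all_order all_algebra.
From mathcomp Require Import reals.
Set Implicit Arguments. Unset Strict Implicit. Unset Printing Implicit Defensive.
Import Order.TTheory GRing.Theory Num.Theory.
Local Open Scope ring_scope.

Definition inner (R : realType) (d : nat) (u v : 'rV[R]_d) : R :=
  \sum_(t < d) u 0 t * v 0 t.

(* the family F = U_{i in I} {p_i, p'_i}, indexed by 'I_(n + n):
   the first n indices give p_i, the last n give p'_i *)
Definition fam (R : realType) (d n : nat) (p p' : 'I_n -> 'rV[R]_d)
  (k : 'I_(n + n)) : 'rV[R]_d :=
  match split k with inl i => p i | inr i => p' i end.

Definition Gram (R : realType) (d N : nat) (f : 'I_N -> 'rV[R]_d) : 'M[R]_N :=
  \matrix_(k, l) inner (f k) (f l).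

Definition psd (R : realType) (N : nat) (A : 'M[R]_N) : Prop :=
  forall x : 'rV[R]_N, 0 <= (x *m A *m x^T) 0 0.

Definition doubly_nonneg (R : realType) (N : nat) (A : 'M[R]_N) : Prop :=
  A^T = A /\ psd A /\ (forall i j, 0 <= A i j).

Definition completely_positive (R : realType) (N : nat) (X : 'M[R]_N) : Prop :=
  exists k : nat, (1 <= k)%N /\
    exists a : 'I_N -> 'rV[R]_k,
      (forall i t, 0 <= a i 0 t) /\ (forall i j, X i j = inner (a i) (a j)).

(* Main.v *)
Require Import Defs.
From HB Require Import structures.
From mathcomp Require Import all_boot all_order all_algebra.
From mathcomp Require Import reals.
Import Order.TTheory GRing.Theory Num.Theory.
Local Open Scope ring_scope.
Set Implicit Arguments. Unset Strict Implicit.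

Definition lin (R : realType) (d N : nat) (g : 'I_N -> 'rV[R]_d) (x : 'I_N -> R)
  : 'rV[R]_d := \sum_k x k *: g k.

Lemma inner_lin (R : realType) (d N : nat) (g : 'I_N -> 'rV[R]_d) (x y : 'I_N -> R) :
  inner (lin g x) (lin g y) = \sum_k \sum_l x k * y l * inner (g k) (g l).
Proof.
rewrite /inner /lin.
transitivity (\sum_(t < d) \sum_k \sum_l x k * y l * (g k 0 t * g l 0 t)).
  apply: eq_bigr => t _; rewrite !summxE big_distrl /=; apply: eq_bigr => k _.
  rewrite big_distrr /=; apply: eq_bigr => l _; by rewrite !mxE mulrACA.
rewrite exchange_big; apply: eq_bigr => k _; rewrite exchange_big.
apply: eq_bigr => l _; by rewrite mulr_sumr.
Qed.

Lemma inner_ge0 (R : realType) (d : nat) (v : 'rV[R]_d) : 0 <= inner v v.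
Proof. by apply: sumr_ge0 => t _; rewrite -expr2 sqr_ge0. Qed.

Lemma inner_eq0 (R : realType) (d : nat) (v : 'rV[R]_d) : inner v v = 0 -> v = 0.
Proof.
move=> h.
have H : forall t : 'I_d, v 0 t * v 0 t = 0.
  move=> t; apply: (psumr_eq0P _ h) => // s _; by rewrite -expr2 sqr_ge0.
apply/rowP => t; rewrite mxE.
by have /eqP := H t; rewrite mulf_eq0 orbb => /eqP.
Qed.

Lemma inner0 (R : realType) (d : nat) : inner (0 : 'rV[R]_d) 0 = 0.
Proof. by rewrite /inner big1 // => t _; rewrite mxE mul0r. Qed.

Definition mk (R : realType) (n : nat) (xa xb : 'I_n -> R) (k : 'I_(n + n)) : R :=
  match split k with inl i => xa i | inr i => xb i end.

Lemma split_l m n (i : 'I_m) : split (lshift n i) = inl i.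
Proof. exact: (unsplitK (inl _ i)). Qed.
Lemma split_r m n (i : 'I_n) : split (rshift m i) = inr i.
Proof. exact: (unsplitK (inr _ i)). Qed.

Lemma lin_mk (R : realType) (d n : nat) (g : 'I_(n + n) -> 'rV[R]_d) xa xb :
  lin g (mk xa xb) = \sum_i xa i *: g (lshift n i) + \sum_i xb i *: g (rshift n i).
Proof.
rewrite /lin big_split_ord /=; congr (_ + _); apply: eq_bigr => i _;
  by rewrite /mk ?split_l ?split_r.
Qed.

Lemma delta_sum (R : realType) (d n : nat) (v : 'I_n -> 'rV[R]_d) i :
  \sum_j (j == i)%:R *: v j = v i.
Proof.
rewrite (bigD1 i) //= eqxx scale1r big1 ?addr0 // => j /negbTE ->.
by rewrite scale0r.
Qed.

Lemma lincomb (R : realType) (d n : nat) (v : 'I_n -> 'rV[R]_d) a m i0 :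
  \sum_j (a j - m * (j == i0)%:R) *: v j = \sum_j a j *: v j - m *: v i0.
Proof.
under eq_bigr do rewrite scalerBl -scalerA.
by rewrite sumrB -scaler_sumr delta_sum.
Qed.

Lemma sum0s (R : realType) (d n : nat) (v : 'I_n -> 'rV[R]_d) :
  \sum_j (0 : R) *: v j = 0.
Proof. by rewrite big1 // => j _; rewrite scale0r. Qed.

Lemma sumJ (R : realType) (d n : nat) (v : 'I_n -> 'rV[R]_d) (J : {set 'I_n}) :
  \sum_j (j \in J)%:R *: v j = \sum_(j in J) v j.
Proof.
rewrite [RHS]big_mkcond; apply: eq_bigr => j _.
by case: (j \in J); rewrite ?scale1r ?scale0r.
Qed.

Theorem theorem4p10 (R : realType) (d n : nat) (p p' : 'I_n -> 'rV[R]_d) :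
  (exists c : 'rV[R]_d,
     c != 0 /\
     (forall i, (2%:R)^-1 *: (p i + p' i) = c) /\
     (exists J : {set 'I_n}, odd #|J| /\ \sum_(j in J) p j = #|J|%:R *: c)) ->
  (forall i, inner (p i) (p' i) = 0) ->
  (forall k l : 'I_(n + n), 0 <= inner (fam p p' k) (fam p p' l)) ->
  doubly_nonneg (Gram (fam p p')) /\ ~ completely_positive (Gram (fam p p')).
Proof.
move=> [c [c0 [hc [J [oddJ hJ]]]]] hpp hnn.
set f := fam p p'.
have fam_l : forall i, f (lshift n i) = p i by move=> i; rewrite /f /fam split_l.
have fam_r : forall i, f (rshift n i) = p' i by move=> i; rewrite /f /fam split_r.
split.
  split; first by apply/matrixP => k l; rewrite !mxE /inner; apply: eq_bigr => t _; apply: mulrC.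
  split; last by move=> k l; rewrite mxE; apply: hnn.
  move=> x.
  have -> : (x *m Gram f *m x^T) 0 0 =
      inner (lin f (fun k => x 0 k)) (lin f (fun k => x 0 k)).
    rewrite inner_lin mxE exchange_big; apply: eq_bigr => l _.
    rewrite !mxE big_distrl; apply: eq_bigr => k _; by rewrite !mxE mulrAC.
  exact: inner_ge0.
move=> [k [_ [a [ha hX]]]].
have HG : forall k l, inner (f k) (f l) = inner (a k) (a l).
  by move=> k1 l1; rewrite -hX mxE.
have tr : forall x y, inner (lin f x) (lin f y) = inner (lin a x) (lin a y).
  move=> x y; rewrite !inner_lin; apply: eq_bigr => k1 _; apply: eq_bigr => l1 _.
  by rewrite HG.
have z : forall x, lin f x = 0 -> lin a x = 0.
  by move=> x h; apply: inner_eq0; rewrite -tr h inner0.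
have [i0 i0J] : exists i0, i0 \in J.
  case: (set_0Vmem J) => [J0|[i0 H]]; last by exists i0.
  by rewrite J0 cards0 in oddJ.
have two0 : (2%:R : R) != 0 by rewrite pnatr_eq0.
have hc' : forall i, p i + p' i = 2%:R *: c.
  by move=> i; rewrite -(hc i) scalerA mulfV // scale1r.
set e := a (lshift n i0) + a (rshift n i0).
have H1 : forall i, a (lshift n i) + a (rshift n i) = e.
  move=> i.
  have := z (mk (fun j => (j == i)%:R - 1 * (j == i0)%:R)
                (fun j => (j == i)%:R - 1 * (j == i0)%:R)).
  rewrite !lin_mk !lincomb !delta_sum !fam_l !fam_r !scale1r addrACA -opprD !hc' subrr.
  move=> /(_ erefl) /eqP; rewrite addrACA -opprD subr_eq0 => /eqP.
  done.
set m := (#|J|%:R / 2%:R : R).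
have H2 : 2%:R *: \sum_(j in J) a (lshift n j) = #|J|%:R *: e.
  have := z (mk (fun j => (j \in J)%:R - m * (j == i0)%:R)
                (fun j => 0 - m * (j == i0)%:R)).
  rewrite !lin_mk !lincomb !sumJ !sum0s !fam_l !fam_r.
  rewrite (eq_bigr _ (fun j _ => fam_l j)).
  rewrite !add0r -!addrA -!opprD -!scalerDr hc' hJ scalerA /m divfK // subrr.
  move=> /(_ erefl) /eqP; rewrite subr_eq0 => /eqP ->.
  by rewrite scalerA mulrC divfK.
have e0 : e != 0.
  apply/eqP => he.
  have := tr (mk (fun j => (j == i0)%:R) (fun j => (j == i0)%:R))
             (mk (fun j => (j == i0)%:R) (fun j => (j == i0)%:R)).
  rewrite !lin_mk !delta_sum !fam_l !fam_r -/e he inner0 hc' => /inner_eq0 /eqP.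
  by rewrite scaler_eq0 (negbTE two0) (negbTE c0).
have [t et] : exists t, e 0 t != 0.
  case: (pickP (fun t => e 0 t != 0)) => [t ht|hn]; first by exists t.
  have he : e = 0.
    apply/rowP => s; have /= /negbFE/eqP -> := hn s; by rewrite mxE.
  by rewrite he eqxx in e0.
have H4 : forall j, a (lshift n j) 0 t * a (rshift n j) 0 t = 0.
  move=> j; have := hpp j; rewrite -fam_l -fam_r HG /inner => h.
  have := psumr_eq0P _ h; apply => //.
  by move=> s _; apply: mulr_ge0; apply: ha.
have H5 : forall j, a (lshift n j) 0 t = (a (lshift n j) 0 t != 0)%:R * e 0 t.
  move=> j; case: eqP => [->|/eqP ne]; first by rewrite mul0r.
  rewrite mul1r -(H1 j) mxE.
  have /eqP := H4 j; rewrite mulf_eq0 (negbTE ne) /= => /eqP ->.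
  by rewrite addr0.
have := congr1 (fun M : 'rV[R]_k => M 0 t) H2 => /=.
rewrite [LHS]mxE [RHS]mxE summxE.
under eq_bigr do rewrite H5.
rewrite -mulr_suml -natr_sum mulrA -natrM => /(mulIf et) /eqP.
rewrite eqr_nat => /eqP hE.
by rewrite -hE oddM in oddJ.
Qed.
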